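(* The categories $\mathbf{Norm}$, $\mathbf{Ban}$ and $\mathbf{OSp}$ have no non-zero regular projective objects.
   Context: The ground field is $\mathbb{R}$ or $\mathbb{C}$. $\mathbf{OSp}$ is the category of (not necessarily complete) operator spaces with completely contractive linear maps; $\mathbf{Norm}$ (resp. $\mathbf{Ban}$) is the category of normed (resp. Banach) spaces with contractive linear maps. A regular epimorphism is a morphism that is the coequalizer of some pair of parallel morphisms. An object $p$ is regular projective if for every regular epimorphism $x\to y$ and every morphism $p\to y$ there exists a morphism $p\to x$ whose composite with $x\to y$ is the given $p\to y$. *)

(* Defs.v *)
From HB Require Import structures.
From mathcomp Require Import all_boot all_order all_algebra.
From mathcomp Require Import reals.
From mathcomp Require Import complex.

Set Implicit Arguments.
Unset Strict Implicit.
Unset Printing Implicit Defensive.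

Import Order.TTheory GRing.Theory Num.Theory.
Local Open Scope ring_scope.

(* Generic notions for a concrete category whose objects carry a K-vector   *)
(* space, whose morphisms are the functions satisfying a predicate [isHom]   *)
(* (composition = composition of functions, identity = identity function), *)
(* and where two morphisms are equal iff they are pointwise equal.          *)
Section ConcreteCategory.
Variables (K : numFieldType) (Obj : Type) (car : Obj -> lmodType K).
Variable isHom : forall X Y : Obj, (car X -> car Y) -> Prop.

Definition is_coequalizer (X Y Z : Obj) (f g : car X -> car Y)
    (e : car Y -> car Z) : Prop :=
  isHom e /\ (forall x, e (f x) = e (g x)) /\
  forall (W : Obj) (h : car Y -> car W), isHom h ->
    (forall x, h (f x) = h (g x)) ->
    exists u : car Z -> car W,
      [/\ isHom u, (forall y, u (e y) = h y) &
          forall u' : car Z -> car W, isHom u' ->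
            (forall y, u' (e y) = h y) -> forall z, u' z = u z].

Definition is_regular_epi (Y Z : Obj) (e : car Y -> car Z) : Prop :=
  exists (X : Obj) (f g : car X -> car Y),
    [/\ isHom f, isHom g & is_coequalizer f g e].

Definition is_regular_projective (P : Obj) : Prop :=
  forall (X Y : Obj) (q : car X -> car Y), is_regular_epi q ->
  forall h : car P -> car Y, isHom h ->
  exists k : car P -> car X, isHom k /\ forall p, q (k p) = h p.

Definition nonzero_obj (P : Obj) : Prop := exists v : car P, v <> 0.

Definition no_nonzero_regular_projective : Prop :=
  forall P : Obj, nonzero_obj P -> ~ is_regular_projective P.

End ConcreteCategory.

Definition is_linear (K : numFieldType) (V W : lmodType K) (f : V -> W) :=
  forall (a : K) (x y : V), f (a *: x + y) = a *: f x + f y.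

(* Norm and Ban (norms take values in the scalar field K, as in MathComp;   *)
(* for K = R[i] they are nonnegative reals of R[i]).                         *)
Definition is_norm_sc (K : numFieldType) (V : zmodType) (sc : K -> V -> V)
    (nm : V -> K) :=
  [/\ forall x, 0 <= nm x,
      forall x, nm x = 0 -> x = 0,
      forall x y, nm (x + y) <= nm x + nm y &
      forall (a : K) x, nm (sc a x) = `|a| * nm x].

Definition is_norm (K : numFieldType) (V : lmodType K) (nm : V -> K) :=
  is_norm_sc ( *:%R ) nm.

Definition mx_scale (K : numFieldType) (V : lmodType K) n (a : K)
    (v : 'M[V]_n) : 'M[V]_n := map_mx (fun x => a *: x) v.

Record normed (K : numFieldType) := Normed {
  ncar :> lmodType K;
  nnorm : ncar -> K;
  nnorm_is_norm : is_norm nnorm }.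

Definition normed_hom (K : numFieldType) (X Y : normed K)
    (f : ncar X -> ncar Y) : Prop :=
  is_linear f /\ forall x, nnorm (f x) <= nnorm x.

Definition complete_normed (K : numFieldType) (X : normed K) : Prop :=
  forall u : nat -> ncar X,
    (forall e : K, 0 < e -> exists N, forall m n, (N <= m)%N -> (N <= n)%N ->
        nnorm (u m - u n) < e) ->
    exists l : ncar X, forall e : K, 0 < e -> exists N, forall n, (N <= n)%N ->
        nnorm (u n - l) < e.

Record banach (K : numFieldType) := Banach {
  bnormed : normed K;
  bcomplete : complete_normed bnormed }.

Definition banach_hom (K : numFieldType) (X Y : banach K)
    (f : ncar (bnormed X) -> ncar (bnormed Y)) : Prop :=
  normed_hom f.

(* OSp: abstract operator spaces (Ruan's axioms).                           *)
Definition sqnorm2 (K : numFieldType) n (x : 'cV[K]_n) : K :=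
  \sum_(i < n) `|x i 0| ^+ 2.

Definition contraction (K : numFieldType) m n (alpha : 'M[K]_(m, n)) : Prop :=
  forall x : 'cV[K]_n, sqnorm2 (alpha *m x) <= sqnorm2 x.

Definition smx_mul (K : numFieldType) (V : lmodType K) m n
    (alpha : 'M[K]_(m, n)) (v : 'M[V]_n) (beta : 'M[K]_(n, m)) : 'M[V]_m :=
  \matrix_(i, j) \sum_(k < n) \sum_(l < n) (alpha i k * beta l j) *: v k l.

Record ospace (K : numFieldType) := OSpace {
  ocar :> lmodType K;
  onorm : forall n, 'M[ocar]_n -> K;
  onorm_is_norm : forall n, is_norm_sc (@mx_scale K ocar n) (@onorm n);
  onorm_R1 : forall m n (v : 'M[ocar]_m) (w : 'M[ocar]_n),
      onorm (block_mx v 0 0 w) = Num.max (onorm v) (onorm w);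
  (* Ruan's axiom (R2), ||alpha v beta|| <= ||alpha|| ||v|| ||beta||,
     stated for contractive scalar matrices (equivalent by homogeneity) *)
  onorm_R2 : forall m n (alpha : 'M[K]_(m, n)) (v : 'M[ocar]_n)
      (beta : 'M[K]_(n, m)),
      contraction alpha -> contraction beta ->
      onorm (smx_mul alpha v beta) <= onorm v }.

Definition ospace_hom (K : numFieldType) (X Y : ospace K)
    (f : ocar X -> ocar Y) : Prop :=
  is_linear f /\ forall n (v : 'M[ocar X]_n), onorm (map_mx f v) <= onorm v.

Definition claim (K : numFieldType) : Prop :=
  [/\ @no_nonzero_regular_projective K (normed K) (@ncar K) (@normed_hom K),
      @no_nonzero_regular_projective K (banach K)
        (fun X : banach K => ncar (bnormed X)) (@banach_hom K) &
      @no_nonzero_regular_projective K (ospace K) (@ocar K) (@ospace_hom K)].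

(* Main.v *)
Require Import Defs.
From HB Require Import structures.
From mathcomp Require Import all_boot all_order all_algebra.
From mathcomp Require Import boolp classical_sets reals.
From mathcomp Require Import complex.
Set Implicit Arguments. Unset Strict Implicit. Unset Printing Implicit Defensive.
Import Order.TTheory GRing.Theory Num.Theory.
Local Open Scope ring_scope.
Local Open Scope complex_scope.

Definition HsupT (K : numFieldType) := forall s : nat -> K, (forall n, 0 <= s n) ->
  (exists B, forall n, s n <= B) ->
  exists l, (forall n, s n <= l) /\ (forall b, (forall n, s n <= b) -> l <= b).
Definition HarchT (K : numFieldType) := forall r : K, 0 <= r -> exists n : nat, r <= n%:R.

Lemma HsupR (R : realType) : HsupT R.
Proof.
move=> s s0 [B hB].
have hs : has_sup (range s).
  split; first by exists (s 0%N), 0%N.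
  by exists B => _ [n _ <-].
exists (sup (range s)); split.
  by move=> n; apply: sup_upper_bound => //; exists n.
move=> b hb; apply: ge_sup; first by exists (s 0%N), 0%N.
by move=> _ [n _ <-].
Qed.

Lemma HarchR (R : realType) : HarchT R.
Proof. by move=> r r0; exists (Num.bound r); apply/ltW/archi_boundP. Qed.

Lemma HsupC (R : realType) : HsupT R[i].
Proof.
move=> s s0 [B hB].
have sR n : s n = (complex.Re (s n))%:C.
  by rewrite RRe_real // ger0_real.
have h1 : forall n, 0 <= complex.Re (s n).
  by move=> n; have := s0 n; rewrite lecE /= => /andP[].
have h2 : exists B, forall n, complex.Re (s n) <= B.
  by exists (complex.Re B) => n; have := hB n; rewrite lecE /= => /andP[].
have [l [hl1 hl2]] := @HsupR R (fun n => complex.Re (s n)) h1 h2.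
exists l%:C; split.
    by move=> n; rewrite sR lecR hl1.
  move=> b hb.
  have := hb 0%N; rewrite sR lecE /= => /andP[/eqP hI _].
  rewrite lecE /= hI eqxx /=; apply: hl2 => n.
  by have := hb n; rewrite sR lecE /= => /andP[_].
Qed.

Lemma HarchC (R : realType) : HarchT R[i].
Proof.
move=> r r0.
have rR : r = (complex.Re r)%:C by rewrite RRe_real // ger0_real.
have r0' : 0 <= complex.Re r by move: r0; rewrite lecE /= => /andP[].
have [n hn] := @HarchR R (complex.Re r) r0'.
exists n; rewrite rR -(rmorph_nat (real_complex R)) lecR //.
Qed.

Local Close Scope complex_scope.


Section W.
Variable K : numFieldType.
Definition wt (k : nat) : K := (2%:R ^+ k)^-1.

Lemma wt_gt0 k : 0 < wt k.
Proof. by rewrite /wt invr_gt0 exprn_gt0 // ltr0n. Qed.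
Lemma wt0 : wt 0 = 1.
Proof. by rewrite /wt expr0 invr1. Qed.
Lemma wt_le n k : (n <= k)%N -> wt k <= wt n.
Proof.
move=> nk; rewrite /wt lef_pV2 ?posrE ?exprn_gt0 ?ltr0n //.
by rewrite ler_eXn2l // ltr1n.
Qed.
Lemma wt_le1 k : wt k <= 1.
Proof. by rewrite -wt0 wt_le. Qed.

Variables (W : zmodType) (sc : K -> W -> W) (p : W -> K).
Hypotheses (pN : is_norm_sc sc p)
  (scDr : forall a x y, sc a (x + y) = sc a x + sc a y)
  (scDl : forall a b x, sc (a + b) x = sc a x + sc b x)
  (scA : forall a b x, sc a (sc b x) = sc (a * b) x)
  (sc1 : forall x, sc 1 x = x).

Lemma sc0r x : sc 0 x = 0.
Proof. by apply: (addIr (sc 0 x)); rewrite -scDl !add0r. Qed.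
Lemma scr0 a : sc a 0 = 0.
Proof. by apply: (addIr (sc a 0)); rewrite -scDr !add0r. Qed.
Lemma scrN a x : sc a (- x) = - sc a x.
Proof. by apply: (addIr (sc a x)); rewrite -scDr !addNr scr0. Qed.
Lemma scrB a x y : sc a (x - y) = sc a x - sc a y.
Proof. by rewrite scDr scrN. Qed.
Lemma scC a b x : sc a (sc b x) = sc b (sc a x).
Proof. by rewrite !scA mulrC. Qed.

Lemma p_ge0 x : 0 <= p x. Proof. by case: pN => H _ _ _; apply: H. Qed.
Lemma p0 : p 0 = 0.
Proof. by case: pN => _ _ _ h; rewrite -(sc0r 0) h normr0 mul0r. Qed.
Lemma p_eq0 x : p x = 0 -> x = 0. Proof. by case: pN => _ H _ _; apply: H. Qed.
Lemma pD x y : p (x + y) <= p x + p y. Proof. by case: pN => _ _ H _; apply: H. Qed.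
Lemma pZ a x : p (sc a x) = `|a| * p x. Proof. by case: pN => _ _ _ H; apply: H. Qed.

Lemma scN1 x : sc (-1) x = - x.
Proof. by apply: (addIr (sc 1 x)); rewrite -scDl addNr sc0r sc1 addNr. Qed.
Lemma pNeg x : p (- x) = p x.
Proof. by rewrite -scN1 pZ normrN normr1 mul1r. Qed.
Lemma pB x y : p (x - y) <= p x + p y.
Proof. by rewrite -(pNeg y) pD. Qed.

Definition Tk (z : nat -> W) k := z 0%N + sc (wt k) (z 0%N - z k).
Definition Phi (z : nat -> W) j := if odd j then Tk z j./2 else z j./2.

Lemma Phi_even z k : Phi z k.*2 = z k.
Proof. by rewrite /Phi odd_double /= doubleK. Qed.
Lemma Phi_odd z k : Phi z k.*2.+1 = Tk z k.
Proof. by rewrite /Phi /= odd_double /= uphalf_double. Qed.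
Lemma Phi0 z : Phi z 0 = z 0%N.
Proof. exact: (Phi_even z 0). Qed.

Lemma PhiD z1 z2 j : Phi (fun k => z1 k + z2 k) j = Phi z1 j + Phi z2 j.
Proof.
rewrite /Phi /Tk; case: (odd j) => //.
set a1 := z1 0%N; set a2 := z2 0%N; set b1 := z1 _; set b2 := z2 _.
have -> : a1 + a2 - (b1 + b2) = (a1 - b1) + (a2 - b2) by rewrite opprD addrACA.
by rewrite scDr addrACA.
Qed.
Lemma PhiZ a z j : Phi (fun k => sc a (z k)) j = sc a (Phi z j).
Proof.
rewrite /Phi /Tk; case: (odd j) => //.
by rewrite -scrB scC scDr.
Qed.
Lemma Phi_ext z1 z2 j : (forall k, z1 k = z2 k) -> Phi z1 j = Phi z2 j.
Proof. by move=> e; rewrite /Phi /Tk !e. Qed.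

Definition approx (y : W) n k := if (k <= n)%N then y else 0.

Lemma approx_bound y n j : p (Phi (approx y n) j) <= (1 + wt n) * p y.
Proof.
have py := p_ge0 y.
have le1 : p y <= (1 + wt n) * p y.
  by rewrite ler_peMl // lerDl ltW // wt_gt0.
rewrite /Phi /Tk /approx /=; case: (odd j); last first.
  by case: leqP => _ //; rewrite p0; apply: le_trans le1.
  case: leqP => kn.
    by rewrite subrr scr0 addr0.
  rewrite subr0 -{1}[y]sc1 -scDl pZ ger0_norm; last first.
    by rewrite addr_ge0 // ltW // wt_gt0.
  by rewrite ler_wpM2r // lerD2l wt_le // ltnW.
Qed.

Lemma strict_gap z k : p (z k) < p (z 0%N) -> p (z 0%N) < p (Phi z k.*2.+1).
Proof.
move=> lt; rewrite Phi_odd /Tk.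
set T := _ + _.
have e : sc (1 + wt k) (z 0%N) = T + sc (wt k) (z k).
  by rewrite /T scDl sc1 scrB -addrA addrNK.
have w0 := wt_gt0 k.
have h1 := pD T (sc (wt k) (z k)).
have n1 : `|1 + wt k| = 1 + wt k by rewrite ger0_norm // addr_ge0 // ltW.
have n2 : `|wt k| = wt k by rewrite ger0_norm // ltW.
rewrite -e !pZ n1 n2 in h1.
have h2 : wt k * p (z k) < wt k * p (z 0%N) by rewrite ltr_pM2l // wt_gt0.
rewrite mulrDl mul1r in h1.
have h3 : p T + wt k * p (z k) < p T + wt k * p (z 0%N) by rewrite ltrD2l.
have := le_lt_trans h1 h3.
by rewrite ltrD2r.
Qed.
End W.
Section Sup.
Variables (K : numFieldType) (Hsup : HsupT K).

Lemma max_ge0_le (a b c : K) : 0 <= a -> 0 <= b ->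
  (Num.max a b <= c) = (a <= c) && (b <= c).
Proof.
move=> a0 b0; rewrite /Num.max /Order.max.
case: (real_ltgtP (ger0_real a0) (ger0_real b0)) => ab.
- by apply/idP/andP => [h|[]//]; split=> //; apply: le_trans h; apply: ltW.
- by apply/idP/andP => [h|[]//]; split=> //; apply: le_trans h; apply: ltW.
- by subst b; rewrite andbb.
Qed.
Lemma le_max_l (a b : K) : 0 <= a -> 0 <= b -> a <= Num.max a b.
Proof.
move=> a0 b0; have := le_refl (Num.max a b).
by rewrite max_ge0_le // => /andP[].
Qed.
Lemma le_max_r (a b : K) : 0 <= a -> 0 <= b -> b <= Num.max a b.
Proof.
move=> a0 b0; have := le_refl (Num.max a b).
by rewrite max_ge0_le // => /andP[].
Qed.
Lemma max_ge0 (a b : K) : 0 <= a -> 0 <= b -> 0 <= Num.max a b.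
Proof. by move=> a0 b0; apply: le_trans (le_max_l a0 b0). Qed.

Definition islub (s : nat -> K) l :=
  (forall n, s n <= l) /\ (forall b, (forall n, s n <= b) -> l <= b).

Definition supK (s : nat -> K) : K :=
  match pselect (exists l, islub s l) with
  | left H => projT1 (cid H)
  | right _ => 0 end.

Lemma supK_lub s : (forall n, 0 <= s n) -> (exists B, forall n, s n <= B) ->
  islub s (supK s).
Proof.
move=> s0 hB; rewrite /supK; case: pselect => [H|H].
  exact: (projT2 (cid H)).
by exfalso; apply: H; apply: Hsup.
Qed.

Lemma supK_ub s n : (forall n, 0 <= s n) -> (exists B, forall n, s n <= B) ->
  s n <= supK s.
Proof. by move=> s0 hB; case: (supK_lub s0 hB) => h _; apply: h. Qed.

Lemma supK_le s b : (forall n, 0 <= s n) -> (forall n, s n <= b) -> supK s <= b.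
Proof.
move=> s0 hb; have hB : exists B, forall n, s n <= B by exists b.
by case: (supK_lub s0 hB) => _ h; apply: h.
Qed.

Lemma supK_ge0 s : (forall n, 0 <= s n) -> 0 <= supK s.
Proof.
move=> s0; rewrite /supK; case: pselect => [H|//].
case: (projT2 (cid H)) => h _; exact: le_trans (s0 0%N) (h 0%N).
Qed.

Lemma supK_max (a b : nat -> K) : (forall n, 0 <= a n) -> (forall n, 0 <= b n) ->
  (exists B, forall n, a n <= B) -> (exists B, forall n, b n <= B) ->
  supK (fun n => Num.max (a n) (b n)) = Num.max (supK a) (supK b).
Proof.
move=> a0 b0 ha hb.
have m0 n : 0 <= Num.max (a n) (b n) by apply: max_ge0.
have sa0 := supK_ge0 a0; have sb0 := supK_ge0 b0.
apply: le_anti; apply/andP; split.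
  apply: supK_le => // n; rewrite max_ge0_le; [apply/andP; split|by []|by []].
    exact: le_trans (supK_ub _ a0 ha) (le_max_l _ _).
  exact: le_trans (supK_ub _ b0 hb) (le_max_r _ _).
have hm : exists B, forall n, Num.max (a n) (b n) <= B.
  case: ha => A hA; case: hb => B hB; exists (A + B) => n.
  rewrite max_ge0_le; [apply/andP; split|by []|by []].
    by rewrite -[a n]addr0 lerD // (le_trans (b0 0%N) (hB 0%N)).
  by rewrite -[b n]add0r lerD // (le_trans (a0 0%N) (hA 0%N)).
rewrite max_ge0_le; [apply/andP; split; apply: supK_le => // n|by []|by []].
  exact: le_trans (le_max_l _ _) (supK_ub _ m0 hm).
exact: le_trans (le_max_r _ _) (supK_ub _ m0 hm).
Qed.

Lemma ev_bounded (s : nat -> K) (c : K) N : (forall n, 0 <= s n) ->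
  (forall n, (N <= n)%N -> s n <= c) -> exists B, forall n, s n <= B.
Proof.
move=> s0 hc; exists (`|c| + \sum_(i < N) s i) => n.
case: (leqP N n) => nN.
  apply: le_trans (hc _ nN) _; apply: le_trans (real_ler_norm _) _.
    by apply: ger0_real; apply: le_trans (s0 n) (hc _ nN).
  by rewrite lerDl sumr_ge0.
rewrite (bigD1 (Ordinal nN)) //= addrCA lerDl addr_ge0 //.
by rewrite sumr_ge0.
Qed.
End Sup.


Record memT (K : numFieldType) (V : lmodType K) := MemT {
  mem :> (nat -> V) -> Prop;
  mem0 : mem (fun _ => 0);
  memD : forall x y, mem x -> mem y -> mem (fun k => x k + y k);
  memZ : forall (a : K) x, mem x -> mem (fun k => a *: x k);
  memA : forall (y : V) n, mem (approx y n) }.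

Section SQ.
Variables (K : numFieldType) (V : lmodType K) (M : memT V).

Record sq := Sq { sqf : nat -> V; sqP : M sqf }.

HB.instance Definition _ := gen_eqMixin sq.
HB.instance Definition _ := gen_choiceMixin sq.

Lemma sq_eq (x y : sq) : (forall k, sqf x k = sqf y k) -> x = y.
Proof.
case: x => f fP; case: y => g gP /= efg.
have e : f = g by apply: funext.
subst g; congr Sq; apply: Prop_irrelevance.
Qed.

Definition sq0 := Sq (mem0 M).
Definition sqadd (x y : sq) := Sq (memD (sqP x) (sqP y)).
Definition sqscale (a : K) (x : sq) := Sq (memZ a (sqP x)).
Definition sqopp (x : sq) := sqscale (-1) x.

Lemma sqaddA : associative sqadd.
Proof. by move=> x y z; apply: sq_eq => k /=; rewrite addrA. Qed.
Lemma sqaddC : commutative sqadd.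
Proof. by move=> x y; apply: sq_eq => k /=; rewrite addrC. Qed.
Lemma sqadd0 : left_id sq0 sqadd.
Proof. by move=> x; apply: sq_eq => k /=; rewrite add0r. Qed.
Lemma sqaddN : left_inverse sq0 sqopp sqadd.
Proof. by move=> x; apply: sq_eq => k /=; rewrite scaleN1r addNr. Qed.

HB.instance Definition _ := GRing.isZmodule.Build sq sqaddA sqaddC sqadd0 sqaddN.

Lemma sqscaleA a b v : sqscale a (sqscale b v) = sqscale (a * b) v.
Proof. by apply: sq_eq => k /=; rewrite scalerA. Qed.
Lemma sqscale1 : left_id 1 sqscale.
Proof. by move=> x; apply: sq_eq => k /=; rewrite scale1r. Qed.
Lemma sqscaleDr : right_distributive sqscale +%R.
Proof. by move=> a x y; apply: sq_eq => k /=; rewrite scalerDr. Qed.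
Lemma sqscaleDl v : {morph sqscale^~ v: a b / a + b}.
Proof. by move=> a b; apply: sq_eq => k /=; rewrite scalerDl. Qed.

HB.instance Definition _ := GRing.Zmodule_isLmodule.Build K sq
  sqscaleA sqscale1 sqscaleDr sqscaleDl.

Lemma sqfD (x y : sq) k : sqf (x + y) k = sqf x k + sqf y k. Proof. by []. Qed.
Lemma sqfZ a (x : sq) k : sqf (a *: x) k = a *: sqf x k. Proof. by []. Qed.
Lemma sqf0 k : sqf (0 : sq) k = 0. Proof. by []. Qed.
Lemma sqfN (x : sq) k : sqf (- x) k = - sqf x k. Proof. by rewrite /= scaleN1r. Qed.
Lemma sqfB (x y : sq) k : sqf (x - y) k = sqf x k - sqf y k.
Proof. by rewrite sqfD sqfN. Qed.
Definition sA (y : V) n : sq := Sq (memA M y n).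
Lemma sqf_sA y n k : sqf (sA y n) k = approx y n k. Proof. by []. Qed.
Lemma sqf_sum I (r : seq I) (P : pred I) (F : I -> sq) k :
  sqf (\sum_(i <- r | P i) F i) k = \sum_(i <- r | P i) sqf (F i) k.
Proof. exact: (big_morph (fun x : sq => sqf x k) (fun x y => sqfD x y k) (sqf0 k)). Qed.
End SQ.

Section PhiNorm.
Variables (K : numFieldType) (Hsup : HsupT K).
Variables (W : zmodType) (sc : K -> W -> W) (p : W -> K).
Hypotheses (pN : is_norm_sc sc p)
  (scDr : forall a x y, sc a (x + y) = sc a x + sc a y)
  (scDl : forall a b x, sc (a + b) x = sc a x + sc b x)
  (scA : forall a b x, sc a (sc b x) = sc (a * b) x)
  (sc1 : forall x, sc 1 x = x).

Lemma Phi_bound z j : p (Phi sc z j) <= 2%:R * p (z 0%N) + p (z j./2).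
Proof.
have w0 := wt_gt0 K j./2; have w1 := wt_le1 K j./2.
have pz0 := p_ge0 pN (z 0%N); have pzk := p_ge0 pN (z j./2).
rewrite /Phi /Tk; case: (odd j).
  apply: le_trans (pD pN _ _) _.
  rewrite (pZ pN) (ger0_norm (ltW w0)) mulr2n mulrDl mul1r -addrA lerD2l.
  apply: le_trans (ler_wpM2l (ltW w0) (pB pN scDl sc1 _ _)) _.
  by rewrite -[X in _ <= X]mul1r ler_wpM2r // addr_ge0.
by rewrite lerDr mulr_ge0.
Qed.

Variables (S : zmodType) (scS : K -> S -> S) (sl : S -> nat -> W).
Hypotheses (slD : forall x y k, sl (x + y) k = sl x k + sl y k)
  (slZ : forall a x k, sl (scS a x) k = sc a (sl x k))
  (sl_inj : forall x, (forall k, sl x k = 0) -> x = 0)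
  (slB : forall x, exists B, forall k, p (sl x k) <= B).

Definition NS (x : S) := supK (fun j => p (Phi sc (sl x) j)).

Lemma NS_s0 x j : 0 <= p (Phi sc (sl x) j).
Proof. have := p_ge0 pN (Phi sc (sl x) j); exact. Qed.

Lemma NS_bounded x : exists B, forall j, p (Phi sc (sl x) j) <= B.
Proof.
case: (slB x) => B hB; exists (2%:R * B + B) => j.
apply: le_trans (Phi_bound _ _) _.
by rewrite lerD // ler_wpM2l // ler0n.
Qed.

Lemma NS_ub x j : p (Phi sc (sl x) j) <= NS x.
Proof. exact: (supK_ub Hsup _ (NS_s0 x) (NS_bounded x)). Qed.

Lemma NS_le x b : (forall j, p (Phi sc (sl x) j) <= b) -> NS x <= b.
Proof. exact: (supK_le Hsup (NS_s0 x)). Qed.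

Lemma NS_ge0 x : 0 <= NS x.
Proof. exact: (supK_ge0 (NS_s0 x)). Qed.

Lemma NS_sl0 x : p (sl x 0%N) <= NS x.
Proof. by have := NS_ub x 0; rewrite Phi0. Qed.

Lemma NS_approx x y n : (forall k, sl x k = approx y n k) ->
  NS x <= (1 + wt K n) * p y.
Proof.
move=> e; apply: NS_le => j.
rewrite (Phi_ext sc j e); exact: (approx_bound pN scDr scDl sc1).
Qed.

Lemma NS_strict x k : p (sl x k) < p (sl x 0%N) -> p (sl x 0%N) < NS x.
Proof.
move=> h; apply: lt_le_trans (strict_gap pN scDr scDl sc1 h) _.
exact: NS_ub.
Qed.

Lemma NS_is_norm : is_norm_sc scS NS.
Proof.
split.
- exact: NS_ge0.
- move=> x N0; apply: sl_inj => k.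
  have h := NS_ub x k.*2; rewrite N0 Phi_even in h.
  by apply: (p_eq0 pN); apply: le_anti; rewrite h (p_ge0 pN).
- move=> x y; apply: NS_le => j.
  have e : forall k, sl (x + y) k = sl x k + sl y k by move=> k; apply: slD.
  rewrite (Phi_ext sc j e) (PhiD scDr).
  by apply: le_trans (pD pN _ _) _; apply: lerD; apply: NS_ub.
- move=> a x.
  have e : forall j, p (Phi sc (sl (scS a x)) j) = `|a| * p (Phi sc (sl x) j).
    move=> j; have e : forall k, sl (scS a x) k = sc a (sl x k) by move=> k; apply: slZ.
    by rewrite (Phi_ext sc j e) (PhiZ scDr scA) (pZ pN).
  have [a0|a0] := eqVneq a 0.
    move: e; rewrite a0 normr0 => e; rewrite mul0r.
    apply: le_anti; rewrite NS_ge0 andbT.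
    by apply: NS_le => j; rewrite e mul0r.
  have na : 0 < `|a| by rewrite normr_gt0.
  apply: le_anti; apply/andP; split.
    by apply: NS_le => j; rewrite e ler_wpM2l // NS_ub.
  rewrite -ler_pdivlMl //; apply: NS_le => j.
  by rewrite ler_pdivlMl // -e NS_ub.
Qed.
End PhiNorm.

Lemma lin0 (K : numFieldType) (V W : lmodType K) (f : V -> W) : is_linear f -> f 0 = 0.
Proof.
move=> hf; have := hf (-1) 0 0.
by rewrite scaler0 addr0 scaleN1r addNr.
Qed.
Lemma linZ (K : numFieldType) (V W : lmodType K) (f : V -> W) a x : is_linear f ->
  f (a *: x) = a *: f x.
Proof. by move=> hf; have := hf a x 0; rewrite (lin0 hf) !addr0. Qed.
Lemma linD (K : numFieldType) (V W : lmodType K) (f : V -> W) x y : is_linear f ->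
  f (x + y) = f x + f y.
Proof. by move=> hf; have := hf 1 x y; rewrite !scale1r. Qed.

Section Arch.
Variables (K : numFieldType) (Harch : HarchT K).
Lemma arch_le (a b : K) : 0 <= a -> 0 <= b ->
  (forall n, a <= (1 + wt K n) * b) -> a <= b.
Proof.
move=> a0 b0 h.
case: (real_leP (ger0_real a0) (ger0_real b0)) => // ba; exfalso.
set d := a - b; have d0 : 0 < d by rewrite subr_gt0.
have [n hn] := Harch (divr_ge0 b0 (ltW d0)).
have hb : b <= n%:R * d by rewrite -ler_pdivrMr.
have h2 : (n%:R : K) * d < (2 ^ n)%:R * d.
  by rewrite ltr_pM2r // ltr_nat ltn_expl.
have h3 : wt K n * b < d.
  rewrite /wt mulrC ltr_pdivrMr ?exprn_gt0 ?ltr0n //.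
  by rewrite mulrC -natrX; apply: le_lt_trans hb h2.
have := h n; rewrite mulrDl mul1r => h4.
have : a < b + d by apply: le_lt_trans h4 _; rewrite ltrD2l.
by rewrite /d addrC subrK ltxx.
Qed.
End Arch.

Section NormSeq.
Variables (K : numFieldType) (Hsup : HsupT K) (Harch : HarchT K).
Variable (P : normed K).
Local Notation V := (ncar P).
Local Notation nn := (@nnorm K P).
Let pN : is_norm_sc *:%R nn := nnorm_is_norm P.
Let scDr (a : K) (x y : V) : a *: (x + y) = a *: x + a *: y. Proof. exact: scalerDr. Qed.
Let scDl (a b : K) (x : V) : (a + b) *: x = a *: x + b *: x. Proof. exact: scalerDl. Qed.
Let scA (a b : K) (x : V) : a *: (b *: x) = (a * b) *: x. Proof. exact: scalerA. Qed.
Let sc1 (x : V) : 1 *: x = x. Proof. exact: scale1r. Qed.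

Definition c0p (x : nat -> V) := forall e : K, 0 < e ->
  exists N, forall k, (N <= k)%N -> nn (x k) < e.

Lemma nn0 : nn 0 = 0. Proof. exact: (p0 pN scDl). Qed.
Lemma nn_ge0 x : 0 <= nn x. Proof. exact: (p_ge0 pN). Qed.

Lemma c0p0 : c0p (fun _ => 0).
Proof. by move=> e e0; exists 0%N => k _; rewrite nn0. Qed.
Lemma c0pD x y : c0p x -> c0p y -> c0p (fun k => x k + y k).
Proof.
move=> hx hy e e0.
have e2 : 0 < e / 2%:R by rewrite divr_gt0 // ltr0n.
case: (hx _ e2) => N1 h1; case: (hy _ e2) => N2 h2.
exists (maxn N1 N2) => k; rewrite geq_max => /andP[k1 k2].
apply: le_lt_trans (pD pN _ _) _.
by rewrite [e](splitr e) ltrD ?h1 ?h2.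
Qed.
Lemma c0pZ a x : c0p x -> c0p (fun k => a *: x k).
Proof.
move=> hx e e0; have [a0|a0] := eqVneq a 0.
  by exists 0%N => k _; rewrite a0 scale0r nn0.
have na : 0 < `|a| by rewrite normr_gt0.
case: (hx (e / `|a|)); first by rewrite divr_gt0.
move=> N h; exists N => k kN; rewrite (pZ pN) -ltr_pdivlMl //.
by rewrite mulrC; apply: h.
Qed.
Lemma c0pA y n : c0p (approx y n).
Proof.
move=> e e0; exists n.+1 => k kn; rewrite /approx.
case: leqP => [h|_]; last by rewrite nn0.
by move: (leq_trans kn h); rewrite ltnn.
Qed.

Definition c0mem : memT V := @MemT K V c0p c0p0 c0pD c0pZ c0pA.
Local Notation X := (sq c0mem).

Lemma c0slB (x : X) : exists B, forall k, nn (sqf x k) <= B.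
Proof.
have := sqP x; rewrite /= /c0p => /(_ 1 ltr01) [N h].
by apply: (ev_bounded (c := 1) (N := N)) => [n|n nN]; [apply: nn_ge0|apply: ltW; apply: h].
Qed.

Definition Nx (x : X) : K := NS *:%R nn (@sqf K V c0mem) x.

Lemma Nx_norm : is_norm Nx.
Proof.
apply: (NS_is_norm Hsup pN scDr scDl scA sc1) => //.
- by move=> x h; apply: sq_eq => k; rewrite h.
- exact: c0slB.
Qed.

Definition c0space : normed K := @Normed K X Nx Nx_norm.

Definition qm (x : X) : V := sqf x 0%N.
Definition sm (y : V) : X := sA c0mem y 0%N.
Definition fm (x : X) : X := 2%:R^-1 *: x.
Definition gm (x : X) : X := 2%:R^-1 *: sm (qm x).

Lemma Nx_ub x j : nn (Phi *:%R (sqf x) j) <= Nx x.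
Proof. exact: (NS_ub Hsup pN scDl sc1 c0slB). Qed.
Lemma Nx_q x : nn (qm x) <= Nx x.
Proof. exact: (NS_sl0 Hsup pN scDl sc1 c0slB). Qed.
Lemma Nx_approx y n : Nx (sA c0mem y n) <= (1 + wt K n) * nn y.
Proof. exact: (NS_approx Hsup pN scDr scDl sc1 (sl := @sqf K V c0mem)). Qed.
Lemma Nx_sm y : Nx (sm y) <= 2%:R * nn y.
Proof. by have := Nx_approx y 0; rewrite wt0. Qed.
Lemma Nx_ge0 x : 0 <= Nx x.
Proof. by case: Nx_norm => H _ _ _; apply: H. Qed.
Lemma NxZ a x : Nx (a *: x) = `|a| * Nx x.
Proof. by case: Nx_norm => _ _ _ H; apply: H. Qed.

Lemma sm_lin : is_linear sm.
Proof.
move=> a y y'; apply: sq_eq => k /=; rewrite /approx.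
by case: leqP => _ //; rewrite scaler0 addr0.
Qed.
Lemma qm_lin : is_linear qm. Proof. by []. Qed.
Lemma qm_sm y : qm (sm y) = y. Proof. by []. Qed.

Lemma half_gt0 : 0 < (2%:R : K)^-1. Proof. by rewrite invr_gt0 ltr0n. Qed.
Lemma half_le1 : (2%:R : K)^-1 <= 1. Proof. by rewrite invf_le1 ?ltr0n // ler1n. Qed.
Lemma nhalf : `|(2%:R : K)^-1| = 2%:R^-1. Proof. by rewrite ger0_norm // ltW // half_gt0. Qed.

Lemma qm_hom : normed_hom (X := c0space) (Y := P) qm.
Proof. by split; [exact: qm_lin|exact: Nx_q]. Qed.

Lemma fm_hom : normed_hom (X := c0space) (Y := c0space) fm.
Proof.
split; first by move=> a x y; rewrite /fm scalerDr !scalerA mulrC.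
move=> x /=; rewrite /fm NxZ nhalf -[X in _ <= X]mul1r ler_wpM2r ?Nx_ge0 //.
exact: half_le1.
Qed.

Lemma gm_hom : normed_hom (X := c0space) (Y := c0space) gm.
Proof.
split.
  move=> a x y; rewrite /gm (sm_lin a) scalerDr !scalerA mulrC //.
move=> x /=; rewrite /gm NxZ nhalf.
apply: le_trans (Nx_q x); rewrite ler_pdivrMl ?ltr0n //; exact: Nx_sm.
Qed.

Lemma hh_eq (W : normed K) (hh : X -> ncar W) : is_linear hh ->
  (forall x, hh (fm x) = hh (gm x)) -> forall x, hh x = hh (sm (qm x)).
Proof.
move=> hl e x; have := e x; rewrite /fm /gm !(linZ _ _ hl) => /(congr1 (fun t => 2%:R *: t)).
by rewrite !scalerA mulfV ?pnatr_eq0 // !scale1r.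
Qed.

Lemma c0_coeq (W : normed K) (hh : X -> ncar W) : normed_hom (X := c0space) hh ->
  (forall x, hh (fm x) = hh (gm x)) ->
  exists u : V -> ncar W,
    [/\ normed_hom (X := P) u, (forall y, u (qm y) = hh y) &
        forall u' : V -> ncar W, normed_hom (X := P) u' ->
          (forall y, u' (qm y) = hh y) -> forall z, u' z = u z].
Proof.
move=> [hl hn] e; exists (fun y => hh (sm y)); split.
- split; first by move=> a y y' /=; rewrite sm_lin hl.
  move=> y; apply: (arch_le Harch); [exact: (p_ge0 (nnorm_is_norm W))|exact: nn_ge0|].
  move=> n; apply: le_trans (Nx_approx y n); apply: le_trans (hn _).
  by rewrite (hh_eq hl e (sA c0mem y n)).
- by move=> x; rewrite -hh_eq.
- by move=> u' _ hu z; rewrite -hu.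
Qed.

Lemma c0_nolift (k : V -> X) : normed_hom (X := P) (Y := c0space) k ->
  (forall v, qm (k v) = v) -> forall v : V, v = 0.
Proof.
move=> [kl kn] kq v; apply/eqP; apply/negP => /negP v0.
have nv : 0 < nn v.
  rewrite lt_def nn_ge0 andbT; apply/eqP => /(p_eq0 pN) /eqP.
  by rewrite (negbTE v0).
have := sqP (k v); rewrite /= /c0p => /(_ _ nv) [N hN].
have h := hN N (leqnn N); rewrite -{2}(kq v) in h.
have := NS_strict Hsup pN scDr scDl sc1 c0slB h.
rewrite -/(qm (k v)) kq => h2.
have := lt_le_trans h2 (kn v); rewrite ltxx //.
Qed.
End NormSeq.

Lemma le_eps (K : numFieldType) (a e : K) : 0 <= a -> 0 <= e ->
  (forall d, 0 < d -> a <= e + d) -> a <= e.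
Proof.
move=> a0 e0 h; case: (real_leP (ger0_real a0) (ger0_real e0)) => // ea.
have d0 : 0 < (a - e) / 2%:R by rewrite divr_gt0 ?subr_gt0 // ltr0n.
have h1 : (a - e) / 2%:R < a - e by rewrite ltr_pdivrMr ?ltr0n // ltr_pMr ?subr_gt0 // ltr1n.
have h2 : e + (a - e) / 2%:R < a by move: h1; rewrite -(ltrD2l e) [e + (a - e)]addrC subrK.
by have := lt_le_trans h2 (h _ d0); rewrite ltxx.
Qed.

Section Complete.
Variables (K : numFieldType) (Hsup : HsupT K).
Variable (P : normed K).
Hypothesis hc : complete_normed P.
Local Notation V := (ncar P).
Local Notation nn := (@nnorm K P).
Let pN : is_norm_sc *:%R nn := nnorm_is_norm P.
Let scDr (a : K) (x y : V) : a *: (x + y) = a *: x + a *: y. Proof. exact: scalerDr. Qed.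
Let scDl (a b : K) (x : V) : (a + b) *: x = a *: x + b *: x. Proof. exact: scalerDl. Qed.
Let scA (a b : K) (x : V) : a *: (b *: x) = (a * b) *: x. Proof. exact: scalerA. Qed.
Let sc1 (x : V) : 1 *: x = x. Proof. exact: scale1r. Qed.
Local Notation X := (sq (c0mem P)).
Local Notation Nx := (@Nx K P).

Lemma PhiB (z1 z2 : nat -> V) j :
  Phi *:%R (fun k => z1 k - z2 k) j = Phi *:%R z1 j - Phi *:%R z2 j.
Proof.
have e : forall k, z1 k - z2 k = z1 k + (-1) *: z2 k by move=> k; rewrite scaleN1r.
by rewrite (Phi_ext _ j e) (PhiD scDr) (PhiZ scDr scA) scaleN1r.
Qed.

Lemma Nx_le' (x : X) b : (forall j, nn (Phi *:%R (sqf x) j) <= b) -> Nx x <= b.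
Proof. exact: (NS_le Hsup pN). Qed.

Variable u : nat -> X.
Hypothesis hu : forall e : K, 0 < e -> exists N, forall m n, (N <= m)%N -> (N <= n)%N ->
  Nx (u m - u n) < e.

Lemma coord_le (x : X) k : nn (sqf x k) <= Nx x.
Proof. by have := Nx_ub Hsup x k.*2; rewrite Phi_even. Qed.

Lemma coord_cauchy k : forall e : K, 0 < e -> exists N, forall m n, (N <= m)%N -> (N <= n)%N ->
  nn ((fun m => sqf (u m) k) m - (fun m => sqf (u m) k) n) < e.
Proof.
move=> e e0; case: (hu e0) => N h; exists N => m n mN nN /=.
by rewrite -sqfB; apply: le_lt_trans (coord_le _ _) (h _ _ mN nN).
Qed.

Definition lim_k k : V := proj1_sig (cid (hc (coord_cauchy k))).
Lemma lim_kP k : forall e : K, 0 < e -> exists N, forall n, (N <= n)%N ->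
  nn (sqf (u n) k - lim_k k) < e.
Proof. exact: (proj2_sig (cid (hc (coord_cauchy k)))). Qed.

Lemma unif e : 0 < e -> exists M, forall m, (M <= m)%N -> forall j,
  nn (Phi *:%R (fun k => sqf (u m) k - lim_k k) j) <= e.
Proof.
move=> e0; case: (hu e0) => M hM; exists M => m mM j.
apply: le_eps; [exact: (p_ge0 pN)|exact: ltW|move=> d d0].
have d3 : 0 < d / 3%:R by rewrite divr_gt0 // ltr0n.
case: (lim_kP 0 d3) => N1 h1; case: (lim_kP j./2 d3) => N2 h2.
pose n := maxn M (maxn N1 N2).
have nM : (M <= n)%N by rewrite leq_maxl.
have n1 : (N1 <= n)%N by rewrite /n (leq_trans (leq_maxl N1 N2)) // leq_maxr.
have n2 : (N2 <= n)%N by rewrite /n (leq_trans (leq_maxr N1 N2)) // leq_maxr.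
have e1 : Phi *:%R (fun k => sqf (u m) k - lim_k k) j =
  Phi *:%R (sqf (u m - u n)) j + Phi *:%R (fun k => sqf (u n) k - lim_k k) j.
  rewrite !PhiB; have -> : Phi *:%R (sqf (u m - u n)) j = Phi *:%R (sqf (u m)) j - Phi *:%R (sqf (u n)) j.
    by rewrite -PhiB; apply: Phi_ext => k; rewrite sqfB.
  by rewrite addrA subrK.
rewrite e1; apply: le_trans (pD pN _ _) _.
apply: lerD; first by apply: le_trans (Nx_ub Hsup _ j) _; apply: ltW; apply: hM.
apply: le_trans (Phi_bound pN scDl sc1 _ _) _.
have -> : d = 2%:R * (d / 3%:R) + d / 3%:R.
  by rewrite -[Y in _ = _ + Y]mul1r -mulrDl natr1 mulrC divfK // pnatr_eq0.
by apply: lerD; [rewrite ler_wpM2l ?ler0n //|]; apply: ltW; [apply: h1|apply: h2].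
Qed.

Lemma lim_c0 : c0p (P := P) lim_k.
Proof.
move=> e e0.
have e2 : 0 < e / 2%:R by rewrite divr_gt0 // ltr0n.
case: (unif e2) => M hM.
have := sqP (u M); rewrite /= /c0p => /(_ _ e2) [N hN].
exists N => k kN.
have h1 := hM M (leqnn M) k.*2; rewrite Phi_even in h1.
have -> : lim_k k = sqf (u M) k - (sqf (u M) k - lim_k k) by rewrite opprB addrC subrK.
apply: le_lt_trans (pB pN scDl sc1 _ _) _.
by rewrite [e](splitr e) ltr_leD // hN.
Qed.

Definition limx : X := Sq (M := c0mem P) lim_c0.

Lemma limxP : exists l : X, forall e : K, 0 < e -> exists N, forall n, (N <= n)%N ->
  Nx (u n - l) < e.
Proof.
exists limx => e e0.
have e2 : 0 < e / 2%:R by rewrite divr_gt0 // ltr0n.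
case: (unif e2) => M hM; exists M => n nM.
apply: le_lt_trans (_ : _ <= e / 2%:R) _; last by rewrite ltr_pdivrMr ?ltr0n // ltr_pMr // ltr1n.
apply: Nx_le' => j.
have e' : forall k, sqf (u n - limx) k = sqf (u n) k - lim_k k by move=> k; rewrite sqfB.
by rewrite (Phi_ext _ j e'); apply: hM.
Qed.
End Complete.

Lemma c0_complete_ok (K : numFieldType) (Hsup : HsupT K) (P : normed K) :
  complete_normed P -> complete_normed (c0space Hsup P).
Proof. move=> hc u hu; exact: (limxP Hsup hc hu). Qed.

Section Claims.
Variables (K : numFieldType) (Hsup : HsupT K) (Harch : HarchT K).


Lemma norm_claim : @no_nonzero_regular_projective K (normed K) (@ncar K) (@normed_hom K).
Proof.
move=> P [v v0] RP.
have RE : @is_regular_epi K (normed K) (@ncar K) (@normed_hom K) (c0space Hsup P) P (qm (P := P)).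
  exists (c0space Hsup P), (fm (P := P)), (gm (P := P)).
  split; [exact: fm_hom|exact: gm_hom|].
  split; first exact: qm_hom.
  split; first by [].
  move=> W hh hhom e; exact: (c0_coeq Harch hhom e).
have [k [khom kq]] := RP _ _ _ RE id (conj (fun a x y => erefl) (fun x => lexx _)).
by apply: v0; apply: (c0_nolift khom kq).
Qed.

Lemma ban_claim : @no_nonzero_regular_projective K (banach K)
  (fun X : banach K => ncar (bnormed X)) (@banach_hom K).
Proof.
move=> P [v v0] RP.
pose X := @Banach K (c0space Hsup (bnormed P)) (@c0_complete_ok K Hsup (bnormed P) (@bcomplete K P)).
have RE : @is_regular_epi K (banach K) (fun X : banach K => ncar (bnormed X)) (@banach_hom K) X P (qm (P := bnormed P)).
  exists X, (fm (P := bnormed P)), (gm (P := bnormed P)).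
  split; [exact: fm_hom|exact: gm_hom|].
  split; first exact: qm_hom.
  split; first by [].
  move=> W hh hhom e; exact: (c0_coeq Harch hhom e).
have [k [khom kq]] := RP _ _ _ RE id (conj (fun a x y => erefl) (fun x => lexx _)).
by apply: v0; apply: (c0_nolift khom kq).
Qed.
End Claims.

Section OSp.
Variables (K : numFieldType) (Hsup : HsupT K) (Harch : HarchT K).
Variable (P : ospace K).
Local Notation V := (ocar P).

Definition fsp (x : nat -> V) := exists N, forall k, (N <= k)%N -> x k = 0.
Lemma fsp0 : fsp (fun _ => 0). Proof. by exists 0%N. Qed.
Lemma fspD x y : fsp x -> fsp y -> fsp (fun k => x k + y k).
Proof.
move=> [N1 h1] [N2 h2]; exists (maxn N1 N2) => k; rewrite geq_max => /andP[k1 k2].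
by rewrite h1 // h2 // addr0.
Qed.
Lemma fspZ a x : fsp x -> fsp (fun k => a *: x k).
Proof. by move=> [N h]; exists N => k kN; rewrite h // scaler0. Qed.
Lemma fspA y n : fsp (approx y n).
Proof.
exists n.+1 => k kn; rewrite /approx; case: leqP => [h|//].
by move: (leq_trans kn h); rewrite ltnn.
Qed.
Definition fsmem : memT V := @MemT K V fsp fsp0 fspD fspZ fspA.
Local Notation Xs := (sq fsmem).

Section Level.
Variable n : nat.
Local Notation W := 'M[V]_n.
Let pN : is_norm_sc (@mx_scale K V n) (@onorm K P n) := onorm_is_norm P n.
Let scDr (a : K) (x y : W) : mx_scale a (x + y) = mx_scale a x + mx_scale a y.
Proof. by apply/matrixP => i j; rewrite !mxE scalerDr. Qed.
Let scDl (a b : K) (x : W) : mx_scale (a + b) x = mx_scale a x + mx_scale b x.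
Proof. by apply/matrixP => i j; rewrite !mxE scalerDl. Qed.
Let scA (a b : K) (x : W) : mx_scale a (mx_scale b x) = mx_scale (a * b) x.
Proof. by apply/matrixP => i j; rewrite !mxE scalerA. Qed.
Let sc1 (x : W) : mx_scale 1 x = x.
Proof. by apply/matrixP => i j; rewrite !mxE scale1r. Qed.

Definition slm (M : 'M[Xs]_n) k : W := map_mx (fun x => sqf x k) M.

Definition bnd (x : Xs) : nat := proj1_sig (cid (sqP x)).
Lemma bndP (x : Xs) k : (bnd x <= k)%N -> sqf x k = 0.
Proof. exact: (proj2_sig (cid (sqP x))). Qed.

Lemma slB (M : 'M[Xs]_n) : exists B, forall k, onorm (slm M k) <= B.
Proof.
pose N := \max_(ij : 'I_n * 'I_n) bnd (M ij.1 ij.2).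
apply: (ev_bounded (c := 0) (N := N)) => [k|k kN]; first exact: (p_ge0 pN).
have -> : slm M k = 0.
  apply/matrixP => i j; rewrite !mxE; apply: bndP; apply: leq_trans kN.
  exact: (leq_bigmax_cond (i, j) (P := xpredT)).
by rewrite (p0 pN scDl).
Qed.

Lemma slD (x y : 'M[Xs]_n) k : slm (x + y) k = slm x k + slm y k.
Proof. by apply/matrixP => i j; rewrite !mxE. Qed.
Lemma slZ a (x : 'M[Xs]_n) k : slm (mx_scale a x) k = mx_scale a (slm x k).
Proof. by apply/matrixP => i j; rewrite !mxE. Qed.
Lemma sl_inj (x : 'M[Xs]_n) : (forall k, slm x k = 0) -> x = 0.
Proof.
move=> h; apply/matrixP => i j; rewrite mxE; apply: sq_eq => k.
by have /matrixP/(_ i j) := h k; rewrite !mxE.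
Qed.

Definition onX (M : 'M[Xs]_n) : K := NS (@mx_scale K V n) (@onorm K P n) slm M.

Lemma onX_norm : is_norm_sc (@mx_scale K Xs n) onX.
Proof.
apply: (NS_is_norm Hsup pN scDr scDl scA sc1).
- exact: slD.
- exact: slZ.
- exact: sl_inj.
- exact: slB.
Qed.

Definition psi j (x : Xs) : V := Phi *:%R (sqf x) j.

Lemma PhiM (M : 'M[Xs]_n) j : Phi (@mx_scale K V n) (slm M) j = map_mx (psi j) M.
Proof.
apply/matrixP => a b; rewrite /psi /Phi /Tk !mxE.
by case: (odd j); rewrite !mxE.
Qed.

Lemma onX_ub M j : onorm (map_mx (psi j) M) <= onX M.
Proof. rewrite -PhiM; exact: (NS_ub Hsup pN scDl sc1 slB). Qed.
Lemma onX_le M b : (forall j, onorm (map_mx (psi j) M) <= b) -> onX M <= b.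
Proof. by move=> h; apply: (NS_le Hsup pN) => j; rewrite PhiM. Qed.
Lemma onX_sl0 M : onorm (slm M 0%N) <= onX M.
Proof. exact: (NS_sl0 Hsup pN scDl sc1 slB). Qed.
Lemma onX_approx M (y : 'M[V]_n) n0 : (forall k, slm M k = approx y n0 k) ->
  onX M <= (1 + wt K n0) * onorm y.
Proof. exact: (NS_approx Hsup pN scDr scDl sc1). Qed.
Lemma onX_strict M k : onorm (slm M k) < onorm (slm M 0%N) -> onorm (slm M 0%N) < onX M.
Proof. exact: (NS_strict Hsup pN scDr scDl sc1 slB). Qed.
Lemma onX_ge0 M : 0 <= onX M.
Proof. by case: onX_norm => H _ _ _; apply: H. Qed.
Lemma onXZ a M : onX (mx_scale a M) = `|a| * onX M.
Proof. by case: onX_norm => _ _ _ H; apply: H. Qed.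
Lemma onX_bounded (M : 'M[Xs]_n) : exists B, forall j, onorm (map_mx (psi j) M) <= B.
Proof. by exists (onX M) => j; apply: onX_ub. Qed.
End Level.


Lemma psi0 j : psi j (0 : Xs) = 0.
Proof. by rewrite /psi /Phi /Tk; case: (odd j); rewrite /= ?subrr ?scaler0 ?addr0. Qed.
Lemma psiD j x y : psi j (x + y) = psi j x + psi j y.
Proof.
rewrite /psi; have e : forall k, sqf (x + y) k = sqf x k + sqf y k by move=> k; rewrite sqfD.
by rewrite (Phi_ext _ j e) (PhiD (@scalerDr _ _)).
Qed.
Lemma psiZ j a x : psi j (a *: x) = a *: psi j x.
Proof.
rewrite /psi; have e : forall k, sqf (a *: x) k = a *: sqf x k by move=> k; rewrite sqfZ.
by rewrite (Phi_ext _ j e) (PhiZ (@scalerDr _ _) (@scalerA _ _)).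
Qed.
Lemma psi_sum j I (r : seq I) (Q : pred I) (F : I -> Xs) :
  psi j (\sum_(i <- r | Q i) F i) = \sum_(i <- r | Q i) psi j (F i).
Proof. exact: (big_morph (psi j) (psiD j) (psi0 j)). Qed.

Lemma onXE n (M : 'M[Xs]_n) : onX M = supK (fun j => onorm (map_mx (psi j) M)).
Proof. by rewrite /onX /NS; congr supK; apply: funext => j; rewrite PhiM. Qed.

Lemma onX_R1 m n (v : 'M[Xs]_m) (w : 'M[Xs]_n) :
  onX (block_mx v 0 0 w) = Num.max (onX v) (onX w).
Proof.
have e j : map_mx (psi j) (block_mx v 0 0 w) =
    block_mx (map_mx (psi j) v) 0 0 (map_mx (psi j) w).
  by rewrite map_block_mx; congr block_mx; apply/matrixP => a b; rewrite !mxE psi0.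
rewrite !onXE.
have -> : (fun j => onorm (map_mx (psi j) (block_mx v 0 0 w))) =
    (fun j => Num.max (onorm (map_mx (psi j) v)) (onorm (map_mx (psi j) w))).
  by apply: funext => j; rewrite e onorm_R1.
apply: supK_max => //.
- by move=> j; exact: (p_ge0 (onorm_is_norm P m)).
- by move=> j; exact: (p_ge0 (onorm_is_norm P n)).
- exact: onX_bounded.
- exact: onX_bounded.
Qed.

Lemma onX_R2 m n (al : 'M[K]_(m, n)) (v : 'M[Xs]_n) (be : 'M[K]_(n, m)) :
  contraction al -> contraction be -> onX (smx_mul al v be) <= onX v.
Proof.
move=> ha hb; apply: onX_le => j.
have -> : map_mx (psi j) (smx_mul al v be) = smx_mul al (map_mx (psi j) v) be.
  apply/matrixP => a b; rewrite !mxE psi_sum; apply: eq_bigr => k _.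
  rewrite psi_sum; apply: eq_bigr => l _; rewrite mxE psiZ //.
apply: (le_trans _ (onX_ub v j)); exact: onorm_R2.
Qed.

Definition Xo : ospace K := @OSpace K Xs (fun n => @onX n) (fun n => onX_norm n) onX_R1 onX_R2.

Definition qo (x : Xs) : V := sqf x 0%N.
Definition so (y : V) : Xs := sA fsmem y 0%N.
Definition fo (x : Xs) : Xs := 2%:R^-1 *: x.
Definition go (x : Xs) : Xs := 2%:R^-1 *: so (qo x).

Lemma so_lin : is_linear so.
Proof.
move=> a y y'; apply: sq_eq => k /=; rewrite /approx.
by case: leqP => _ //; rewrite scaler0 addr0.
Qed.

Lemma slm_sA n (N : 'M[V]_n) n0 k :
  slm (map_mx (fun y => sA fsmem y n0) N) k = approx N n0 k.
Proof.
apply/matrixP => a b; rewrite !mxE /= /approx.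
by case: leqP => _; rewrite ?mxE.
Qed.

Lemma onX_sA n (N : 'M[V]_n) n0 :
  onX (map_mx (fun y => sA fsmem y n0) N) <= (1 + wt K n0) * onorm N.
Proof. by apply: onX_approx => k; rewrite slm_sA. Qed.

Lemma qo_hom : ospace_hom (X := Xo) (Y := P) qo.
Proof. by split; [by []|move=> n M; exact: onX_sl0]. Qed.

Lemma fo_hom : ospace_hom (X := Xo) (Y := Xo) fo.
Proof.
split; first by move=> a x y; rewrite /fo scalerDr !scalerA mulrC.
move=> n M /=; rewrite -/(mx_scale _ M) onXZ (nhalf K).
rewrite -[X in _ <= X]mul1r ler_wpM2r ?onX_ge0 //; exact: half_le1.
Qed.

Lemma go_hom : ospace_hom (X := Xo) (Y := Xo) go.
Proof.
split.
  move=> a x y; rewrite /go (so_lin a) scalerDr !scalerA mulrC //.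
move=> n M /=.
have -> : map_mx go M = mx_scale 2%:R^-1 (map_mx so (slm M 0%N)).
  by apply/matrixP => a b; rewrite !mxE.
rewrite onXZ (nhalf K); apply: le_trans (onX_sl0 M).
rewrite ler_pdivrMl ?ltr0n //; have := onX_sA (slm M 0%N) 0; rewrite wt0.
exact.
Qed.

Lemma hh_eqo (W : lmodType K) (hh : Xs -> W) : is_linear hh ->
  (forall x, hh (fo x) = hh (go x)) -> forall x, hh x = hh (so (qo x)).
Proof.
move=> hl e x; have := e x; rewrite /fo /go !(linZ _ _ hl) => /(congr1 (fun t => 2%:R *: t)).
by rewrite !scalerA mulfV ?pnatr_eq0 // !scale1r.
Qed.

Lemma osp_coeq (W : ospace K) (hh : Xs -> ocar W) : ospace_hom (X := Xo) hh ->
  (forall x, hh (fo x) = hh (go x)) ->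
  exists u : V -> ocar W,
    [/\ ospace_hom (X := P) u, (forall y, u (qo y) = hh y) &
        forall u' : V -> ocar W, ospace_hom (X := P) u' ->
          (forall y, u' (qo y) = hh y) -> forall z, u' z = u z].
Proof.
move=> [hl hn] e; exists (fun y => hh (so y)); split.
- split; first by move=> a y y' /=; rewrite so_lin hl.
  move=> n N; apply: (arch_le Harch).
  + exact: (p_ge0 (onorm_is_norm W n)).
  + exact: (p_ge0 (onorm_is_norm P n)).
  move=> n0; apply: le_trans (onX_sA N n0).
  have -> : map_mx (fun y => hh (so y)) N = map_mx hh (map_mx (fun y => sA fsmem y n0) N).
    apply/matrixP => a b; rewrite !mxE.
    by rewrite (hh_eqo hl e (sA fsmem _ n0)).
  exact: hn.
- by move=> x; rewrite -hh_eqo.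
- by move=> u' _ hu z; rewrite -hu.
Qed.

Lemma osp_nolift (k : V -> Xs) : ospace_hom (X := P) (Y := Xo) k ->
  (forall v, qo (k v) = v) -> forall v : V, v = 0.
Proof.
move=> [kl kn] kq v; apply/eqP; apply/negP => /negP v0.
pose M : 'M[V]_1 := const_mx v.
have pN := onorm_is_norm P 1.
have M0 : 0 < onorm M.
  rewrite lt_def (p_ge0 pN) andbT; apply/eqP => /(p_eq0 pN) /matrixP /(_ 0 0).
  by rewrite !mxE => /eqP; rewrite (negbTE v0).
have h1 := kn 1 M.
have e0 : slm (map_mx k M) 0%N = M by apply/matrixP => a b; rewrite !mxE; exact: kq.
have [N hN] := sqP (k v).
have eN : slm (map_mx k M) N = 0 by apply/matrixP => a b; rewrite !mxE hN.
have h2 : onorm (slm (map_mx k M) N) < onorm (slm (map_mx k M) 0%N).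
  rewrite eN e0 (p0 pN) //.
  by move=> a b x; apply/matrixP => i j; rewrite !mxE scalerDl.
have := onX_strict h2; rewrite e0 => h3.
by have := lt_le_trans h3 h1; rewrite ltxx.
Qed.

End OSp.

Lemma osp_claim (K : numFieldType) (Hsup : HsupT K) (Harch : HarchT K) :
  @no_nonzero_regular_projective K (ospace K) (@ocar K) (@ospace_hom K).
Proof.
move=> P [v v0] RP.
have RE : @is_regular_epi K (ospace K) (@ocar K) (@ospace_hom K) (Xo Hsup P) P (@qo K P).
  exists (Xo Hsup P), (@fo K P), (@go K P).
  split; [exact: fo_hom|exact: go_hom|].
  split; first exact: qo_hom.
  split; first by [].
  move=> W hh hhom e; exact: (osp_coeq Harch hhom e).
have idh : @ospace_hom K P P id.
  by split=> // n M; rewrite map_mx_id.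
have [k [khom kq]] := RP _ _ _ RE id idh.
by apply: v0; apply: (osp_nolift khom kq).
Qed.

Lemma claim_of (K : numFieldType) : HsupT K -> HarchT K -> claim K.
Proof.
move=> Hs Ha; split; [exact: norm_claim|exact: ban_claim|exact: osp_claim].
Qed.

Theorem proposition1p7 (R : realType) : claim R /\ claim R[i].
Proof.
split; apply: claim_of.
- exact: HsupR.
- exact: HarchR.
- exact: HsupC.
- exact: HarchC.
Qed.
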